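(* Assume MA($\sigma$-centered). If $\mathcal{I}$ is a strongly unboring ideal, then there is an uncountable separable Mr\'owka space in $\mathrm{FinBW}(\mathcal{I})$.
   Context: An ideal on an infinite countable set $X$ is a family $\mathcal{I}\subseteq\mathcal{P}(X)$ closed under subsets and finite unions, containing all finite subsets, with $X\notin\mathcal{I}$. $\mathcal{I}|C=\{A\cap C:A\in\mathcal{I}\}$. A space $X$ is in $\mathrm{FinBW}(\mathcal{I})$ if $X$ is Hausdorff and for every sequence $(x_n)_{n\in\bigcup\mathcal{I}}$ in $X$ there is $A\notin\mathcal{I}$ with $(x_n)_{n\in A}$ convergent in $X$. $\mathcal{D}_{\mathcal{I}}$ is the set of functions $f:\bigcup\mathcal{I}\to\omega$ with $f^{-1}[\{n\}]\in\mathcal{I}$ for all $n$. An ideal $\mathcal{I}$ on $X$ is $\omega$-diagonalizable by $\mathcal{I}^\star$-universal sets if there are families $\mathcal{Z}_k\subseteq[X]^{<\omega}\setminus\{\emptyset\}$, $k\in\omega$, such that for each $k$ and each $A\in\mathcal{I}$ there is $Z\in\mathcal{Z}_k$ with $Z\cap A=\emptyset$, and for each $A\in\mathcal{I}$ there is $k$ such that no $Z\in\mathcal{Z}_k$ is contained in $A$. $\mathcal{I}$ is strongly unboring if for each $f\in\mathcal{D}_{\mathcal{I}}$ there is $C\notin\mathcal{I}$ such that $f|C$ is finite-to-one and $\mathcal{I}|C$ (an ideal on $C$) is $\omega$-diagonalizable by $(\mathcal{I}|C)^\star$-universal sets. A Mr\'owka space is $\Phi(\mathcal{A})$ for an infinite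 almost disjoint family $\mathcal{A}$ of infinite subsets of $\omega$: underlying set $\omega\cup\mathcal{A}\cup\{\infty\}$, points of $\omega$ isolated, basic neighbourhoods of $A\in\mathcal{A}$ are $\{A\}\cup(A\setminus F)$ ($F\subseteq\omega$ finite), of $\infty$ are $\{\infty\}\cup(\mathcal{A}\setminus G)\cup(\omega\setminus(F\cup\bigcup G))$ ($F\subseteq\omega$, $G\subseteq\mathcal{A}$ finite). *)

(* Defs.v *)
From Stdlib Require Import List.
Import ListNotations.

Definition finite_set {T : Type} (S : T -> Prop) : Prop :=
  exists l : list T, forall x, S x -> In x l.

Definition subset {T : Type} (S S' : T -> Prop) : Prop := forall x, S x -> S' x.

Definition countably_infinite (X : Type) : Prop :=
  exists f : nat -> X, (forall n m, f n = f m -> n = m) /\ (forall x, exists n, f n = x).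

Definition countable_type (T : Type) : Prop :=
  exists f : nat -> T, forall x, exists n, f n = x.

Definition is_ideal {X : Type} (I : (X -> Prop) -> Prop) : Prop :=
  (forall A B, I B -> subset A B -> I A) /\
  (forall A B, I A -> I B -> I (fun x => A x \/ B x)) /\
  (forall A, finite_set A -> I A) /\
  ~ I (fun _ => True).

Definition restr {X : Type} (I : (X -> Prop) -> Prop) (C : X -> Prop) : (X -> Prop) -> Prop :=
  fun A => exists A', I A' /\ forall x, A x <-> (A' x /\ C x).

Definition omega_diag {X : Type} (J : (X -> Prop) -> Prop) (C : X -> Prop) : Prop :=
  exists Zs : nat -> (X -> Prop) -> Prop,
    (forall k Z, Zs k Z -> finite_set Z /\ (exists x, Z x) /\ subset Z C) /\
    (forall k A, J A -> exists Z, Zs k Z /\ forall x, ~ (Z x /\ A x)) /\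
    (forall A, J A -> exists k, forall Z, Zs k Z -> ~ subset Z A).

(** D_I: functions whose fibers are in I (here ⋃I = X since I contains singletons). *)
Definition in_D {X : Type} (I : (X -> Prop) -> Prop) (f : X -> nat) : Prop :=
  forall n, I (fun x => f x = n).

Definition finite_to_one_on {X : Type} (f : X -> nat) (C : X -> Prop) : Prop :=
  forall n, finite_set (fun x => C x /\ f x = n).

Definition strongly_unboring {X : Type} (I : (X -> Prop) -> Prop) : Prop :=
  forall f, in_D I f ->
    exists C : X -> Prop, ~ I C /\ finite_to_one_on f C /\ omega_diag (restr I C) C.

Definition lt_continuum (K : Type) : Prop :=
  (exists g : K -> (nat -> bool), forall a b, g a = g b -> a = b) /\
  ~ (exists h : (nat -> bool) -> K, forall a b, h a = h b -> a = b).

Definition MA_sigma_centered : Prop :=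
  forall (P : Type) (le : P -> P -> Prop),
    (forall p, le p p) ->
    (forall p q r, le p q -> le q r -> le p r) ->
    (exists Ps : nat -> P -> Prop,
        (forall p, exists n, Ps n p) /\
        (forall n (l : list P), (forall p, In p l -> Ps n p) ->
            exists r, forall p, In p l -> le r p)) ->
    forall (K : Type) (D : K -> P -> Prop),
      lt_continuum K ->
      (forall i p, exists q, D i q /\ le q p) ->
      exists G : P -> Prop,
        (exists p, G p) /\
        (forall p q, G p -> le p q -> G q) /\
        (forall p q, G p -> G q -> exists r, G r /\ le r p /\ le r q) /\
        (forall i, exists p, G p /\ D i p).

Definition mrowka_family (A : (nat -> Prop) -> Prop) : Prop :=
  ~ finite_set A /\
  (forall a, A a -> ~ finite_set a) /\
  (forall a b, A a -> A b -> a <> b -> finite_set (fun n => a n /\ b n)).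

Inductive mpoint (A : (nat -> Prop) -> Prop) : Type :=
| MNat : nat -> mpoint A
| MAd : forall a : nat -> Prop, A a -> mpoint A
| MInf : mpoint A.
Arguments MNat {A} n.
Arguments MAd {A} a h.
Arguments MInf {A}.

Definition basic_nbhd (A : (nat -> Prop) -> Prop) (p : mpoint A) (U : mpoint A -> Prop) : Prop :=
  match p with
  | MNat n => forall q, U q <-> q = MNat n
  | MAd a _ => exists F : nat -> Prop, finite_set F /\
      forall q, U q <-> (q = p \/ exists k, q = MNat k /\ a k /\ ~ F k)
  | MInf => exists (F : nat -> Prop) (G : list (nat -> Prop)),
      finite_set F /\ (forall b, In b G -> A b) /\
      forall q, U q <->
        (q = MInf \/
         (exists b h, q = MAd b h /\ ~ In b G) \/
         (exists k, q = MNat k /\ ~ F k /\ ~ (exists b, In b G /\ b k)))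
  end.

Definition mopen (A : (nat -> Prop) -> Prop) (U : mpoint A -> Prop) : Prop :=
  forall p, U p -> exists V, basic_nbhd A p V /\ subset V U.

Definition mhausdorff (A : (nat -> Prop) -> Prop) : Prop :=
  forall p q : mpoint A, p <> q ->
    exists U V, mopen A U /\ mopen A V /\ U p /\ V q /\ forall r, ~ (U r /\ V r).

Definition mseparable (A : (nat -> Prop) -> Prop) : Prop :=
  exists D : mpoint A -> Prop,
    (exists f : nat -> mpoint A, forall p, D p -> exists n, f n = p) /\
    (forall U, mopen A U -> (exists p, U p) -> exists p, U p /\ D p).

Definition mconverges {X : Type} (A : (nat -> Prop) -> Prop)
    (x : X -> mpoint A) (B : X -> Prop) : Prop :=
  exists p, forall U, mopen A U -> U p -> finite_set (fun n => B n /\ ~ U (x n)).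

Definition FinBW {X : Type} (I : (X -> Prop) -> Prop) (A : (nat -> Prop) -> Prop) : Prop :=
  mhausdorff A /\
  forall x : X -> mpoint A, exists B, ~ I B /\ mconverges A x B.

(* Main.v *)
Require Import Defs.
From Stdlib Require Import List Arith Lia Classical ClassicalEpsilon FunctionalExtensionality PropExtensionality ProofIrrelevance.
From Stdlib Require Cantor.
Import ListNotations.

Definition dec (P : Prop) : bool := if excluded_middle_informative P then true else false.

Lemma dec_true P : dec P = true <-> P.
Proof. unfold dec; destruct (excluded_middle_informative P); split; intros; auto; discriminate || contradiction. Qed.

Lemma fin_empty {T} (S : T -> Prop) : (forall x, ~ S x) -> finite_set S.
Proof. intros H; exists []; intros x Hx; exact (H x Hx). Qed.

Lemma fin_sub {T} (S S' : T -> Prop) : finite_set S -> (forall x, S' x -> S x) -> finite_set S'.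
Proof. intros [l Hl] H; exists l; auto. Qed.

Lemma fin_union {T} (S1 S2 : T -> Prop) : finite_set S1 -> finite_set S2 -> finite_set (fun x => S1 x \/ S2 x).
Proof. intros [l1 H1] [l2 H2]; exists (l1 ++ l2); intros x [Hx|Hx]; apply in_or_app; auto. Qed.

Lemma fin_list_union {A T} (l : list A) (F : A -> T -> Prop) :
  (forall a, In a l -> finite_set (F a)) -> finite_set (fun x => exists a, In a l /\ F a x).
Proof.
  induction l as [|a l IH]; intros H.
  - apply fin_empty; intros x [a [[] _]].
  - apply fin_sub with (fun x => F a x \/ exists b, In b l /\ F b x).
    + apply fin_union; [apply H; simpl; auto| apply IH; intros; apply H; simpl; auto].
    + intros x [b [[<-|Hb] Hx]]; [left; auto| right; eauto].
Qed.

Lemma fin_list {T} (l : list T) : finite_set (fun x => In x l).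
Proof. exists l; auto. Qed.

Lemma fin_exact {T} (S : T -> Prop) : finite_set S -> exists l, forall x, In x l <-> S x.
Proof.
  intros [l Hl]; exists (filter (fun x => dec (S x)) l); intros x; rewrite filter_In, dec_true; split; [tauto|auto].
Qed.

Lemma fin_image {A B} (S : A -> Prop) (f : A -> B) : finite_set S -> finite_set (fun m => exists n, S n /\ f n = m).
Proof. intros [l Hl]; exists (map f l); intros m [n [Hn <-]]; apply in_map; auto. Qed.

Lemma fin_bound (P : nat -> Prop) : finite_set P -> exists N, forall n, P n -> n < N.
Proof.
  intros [l Hl]; exists (Datatypes.S (list_max l)); intros n Hn.
  pose proof (proj1 (list_max_le l (list_max l)) (le_n _)) as H.
  rewrite Forall_forall in H; specialize (H n (Hl n Hn)); lia.
Qed.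

Lemma fin_of_bound (S : nat -> Prop) N : (forall n, S n -> n < N) -> finite_set S.
Proof. intros H; exists (seq 0 N); intros n Hn; apply in_seq; specialize (H n Hn); lia. Qed.

Lemma inf_above (S : nat -> Prop) : ~ finite_set S -> forall N, exists n, N <= n /\ S n.
Proof.
  intros H N; apply NNPP; intros H'; apply H; apply fin_of_bound with N.
  intros n Hn; destruct (le_lt_dec N n); auto; exfalso; eauto.
Qed.

Lemma inf_minus_fin {T} (A F : T -> Prop) : ~ finite_set A -> finite_set F -> exists k, A k /\ ~ F k.
Proof.
  intros HA HF; apply NNPP; intros H; apply HA; apply fin_sub with F; auto.
  intros x Ax; apply NNPP; intros nF; apply H; eauto.
Qed.

Lemma no_surj_nat : ~ exists s : nat -> (nat -> bool), forall b, exists n, s n = b.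
Proof.
  intros [s Hs]; destruct (Hs (fun n => negb (s n n))) as [n Hn].
  assert (H := f_equal (fun f => f n) Hn); simpl in H; destruct (s n n); discriminate.
Qed.

Lemma no_inj_nat : ~ exists h : (nat -> bool) -> nat, forall a b, h a = h b -> a = b.
Proof.
  intros [h Hh]; apply no_surj_nat.
  exists (fun n => epsilon (inhabits (fun _ => true)) (fun b => h b = n)).
  intros b; exists (h b); apply Hh; apply (epsilon_spec (inhabits (fun _ => true)) (fun b' => h b' = h b)); eauto.
Qed.

Lemma lt_continuum_nat : lt_continuum nat.
Proof.
  split.
  - exists (fun n m => Nat.eqb n m); intros a b H.
    assert (H' := f_equal (fun f => f b) H); simpl in H'; rewrite Nat.eqb_refl in H'; apply Nat.eqb_eq; auto.
  - exact no_inj_nat.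
Qed.

Fixpoint enc (l : list nat) : nat :=
  match l with [] => 0 | x :: l => Datatypes.S (Cantor.to_nat (x, enc l)) end.

Lemma enc_inj l1 l2 : enc l1 = enc l2 -> l1 = l2.
Proof.
  revert l2; induction l1 as [|x l1 IH]; intros [|y l2]; intros H; try discriminate; auto.
  assert (H' : Cantor.to_nat (x, enc l1) = Cantor.to_nat (y, enc l2)) by (apply Nat.succ_inj; exact H).
  apply Cantor.to_nat_inj in H'; clear H; rename H' into H.
  injection H; intros; subst; f_equal; auto.
Qed.

Section MACore.
Variable T : Type.
Variable b : T -> nat -> Prop.

Definition cond := (list nat * list nat * list T)%type.
Definition sS (c : cond) := fst (fst c).
Definition sR (c : cond) := snd (fst c).
Definition sF (c : cond) := snd c.
Definition good (c : cond) := forall n, In n (sS c) -> ~ In n (sR c).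
Definition Pt := {c : cond | good c}.
Definition lePt (q p : Pt) :=
  let q := proj1_sig q in let p := proj1_sig p in
  incl (sS p) (sS q) /\ incl (sR p) (sR q) /\ incl (sF p) (sF q) /\
  (forall n, In n (sS q) -> ~ In n (sS p) -> forall t, In t (sF p) -> ~ b t n) /\
  (forall n, In n (sR q) -> ~ In n (sR p) -> forall t, In t (sF p) -> ~ b t n).

Lemma lePt_refl p : lePt p p.
Proof. unfold lePt; repeat split; try apply incl_refl; intros; contradiction. Qed.

Lemma lePt_trans p q r : lePt p q -> lePt q r -> lePt p r.
Proof.
  unfold lePt; intros [a1 [a2 [a3 [a4 a5]]]] [b1 [b2 [b3 [b4 b5]]]]; repeat split.
  - eapply incl_tran; eauto.
  - eapply incl_tran; eauto.
  - eapply incl_tran; eauto.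
  - intros n H1 H2 t Ht. destruct (classic (In n (sS (proj1_sig q)))) as [Hq|Hq].
    + eapply b4; eauto.
    + eapply a4; eauto.
  - intros n H1 H2 t Ht. destruct (classic (In n (sR (proj1_sig q)))) as [Hq|Hq].
    + eapply b5; eauto.
    + eapply a5; eauto.
Qed.

Lemma good_nil : good ([], [], []).
Proof. intros n []. Qed.

Lemma MA_core (MA : MA_sigma_centered) (K : Type) (HK : lt_continuum K)
  (tau : K -> option T) (kap : K -> nat)
  (Htau : forall t, exists i, tau i = Some t) (Hkap : forall k, exists i, kap i = k)
  (Zs : nat -> (nat -> Prop) -> Prop)
  (H1 : forall k Z, Zs k Z -> finite_set Z)
  (H2 : forall k (L : list T) (E : nat -> Prop), finite_set E ->
        exists Z, Zs k Z /\ forall n, Z n -> ~ E n /\ forall t, In t L -> ~ b t n) :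
  exists S1 S2 : nat -> Prop, (forall n, ~ (S1 n /\ S2 n)) /\
    (forall k, exists Z, Zs k Z /\ subset Z S1) /\ (forall k, exists Z, Zs k Z /\ subset Z S2) /\
    (forall t, finite_set (fun n => S1 n /\ b t n) /\ finite_set (fun n => S2 n /\ b t n)).
Proof.
  set (D := fun (i : K) (p : Pt) =>
    (forall t, tau i = Some t -> In t (sF (proj1_sig p))) /\
    (exists Z, Zs (kap i) Z /\ forall n, Z n -> In n (sS (proj1_sig p))) /\
    (exists Z, Zs (kap i) Z /\ forall n, Z n -> In n (sR (proj1_sig p)))).
  destruct (MA Pt lePt lePt_refl (fun p q r H H' => lePt_trans p q r H H')) with (K := K) (D := D)
    as [G [[p0 Gp0] [Gup [Gdir Gmeet]]]].
  - exists (fun n p => Cantor.to_nat (enc (sS (proj1_sig p)), enc (sR (proj1_sig p))) = n).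
    split; [intros p; eauto|].
    intros n [|p0 l] Hl.
    + exists (exist _ _ good_nil); intros p [].
    + destruct p0 as [c0 g0].
      exists (exist _ ((sS c0, sR c0), concat (map (fun p => sF (proj1_sig p)) (exist _ c0 g0 :: l))) g0).
      intros p Hp.
      assert (E : sS (proj1_sig p) = sS c0 /\ sR (proj1_sig p) = sR c0).
      { pose proof (Hl p Hp) as A; pose proof (Hl _ (or_introl eq_refl)) as B; cbv beta in A, B; cbn [proj1_sig] in B.
        rewrite <- B in A. apply Cantor.to_nat_inj in A.
        injection A; intros; split; apply enc_inj; auto. }
      destruct E as [E1 E2].
      split; [|split; [|split; [|split]]].
      * intros x Hx; rewrite E1 in Hx; exact Hx.
      * intros x Hx; rewrite E2 in Hx; exact Hx.
      * intros t Ht.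
        change (In t (concat (map (fun p => sF (proj1_sig p)) (exist _ c0 g0 :: l)))).
        apply in_concat; exists (sF (proj1_sig p)); split; auto; apply (in_map (fun p0 : Pt => sF (proj1_sig p0))); auto.
      * intros x H H'; exfalso; apply H'; rewrite E1; exact H.
      * intros x H H'; exfalso; apply H'; rewrite E2; exact H.
  - exact HK.
  - intros i [c Hc].
    destruct c as [[s r] F].
    destruct (H2 (kap i) F (fun n => In n s \/ In n r)) as [Z1 [HZ1 HZ1']].
    { apply fin_union; apply fin_list. }
    destruct (fin_exact Z1 (H1 _ _ HZ1)) as [z1 Hz1].
    destruct (H2 (kap i) F (fun n => In n (z1 ++ s) \/ In n r)) as [Z2 [HZ2 HZ2']].
    { apply fin_union; apply fin_list. }
    destruct (fin_exact Z2 (H1 _ _ HZ2)) as [z2 Hz2].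
    set (F' := match tau i with Some t => t :: F | None => F end).
    assert (Hg : good ((z1 ++ s, z2 ++ r), F')).
    { unfold good, sS, sR; simpl; intros n Hn Hn'.
      apply in_app_or in Hn, Hn'.
      destruct Hn' as [Hn'|Hn'].
      - apply Hz2 in Hn'; apply (proj1 (HZ2' n Hn')); left; apply in_or_app; tauto.
      - destruct Hn as [Hn|Hn].
        + apply Hz1 in Hn; apply (proj1 (HZ1' n Hn)); right; auto.
        + apply (Hc n); auto. }
    exists (exist _ _ Hg); split.
    + unfold D, sF, sS, sR; simpl; repeat split.
      * intros t Ht; unfold F'; rewrite Ht; simpl; auto.
      * exists Z1; split; auto; intros n Hn; apply in_or_app; left; apply Hz1; auto.
      * exists Z2; split; auto; intros n Hn; apply in_or_app; left; apply Hz2; auto.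
    + unfold lePt, sS, sR, sF; simpl; repeat split.
      * intros x Hx; apply in_or_app; auto.
      * intros x Hx; apply in_or_app; auto.
      * intros x Hx; unfold F'; destruct (tau i); simpl; auto.
      * intros n Hn Hn' t Ht; apply in_app_or in Hn; destruct Hn as [Hn|Hn]; [|contradiction].
        apply Hz1 in Hn; apply (proj2 (HZ1' n Hn)); auto.
      * intros n Hn Hn' t Ht; apply in_app_or in Hn; destruct Hn as [Hn|Hn]; [|contradiction].
        apply Hz2 in Hn; apply (proj2 (HZ2' n Hn)); auto.
  - exists (fun n => exists p, G p /\ In n (sS (proj1_sig p))).
    exists (fun n => exists p, G p /\ In n (sR (proj1_sig p))).
    split; [|split; [|split; [|]]].
    + intros n [[p [Gp Hp]] [q [Gq Hq]]].
      destruct (Gdir p q Gp Gq) as [r0 [_ [Hrp Hrq]]].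
      destruct r0 as [c g]; apply (g n).
      * apply (proj1 Hrp); auto.
      * apply (proj1 (proj2 Hrq)); auto.
    + intros k; destruct (Hkap k) as [i <-]; destruct (Gmeet i) as [p [Gp [_ [[Z [HZ HZs]] _]]]].
      exists Z; split; auto; intros n Hn; eauto.
    + intros k; destruct (Hkap k) as [i <-]; destruct (Gmeet i) as [p [Gp [_ [_ [Z [HZ HZs]]]]]].
      exists Z; split; auto; intros n Hn; eauto.
    + intros t; destruct (Htau t) as [i Hi]; destruct (Gmeet i) as [p [Gp [Hpt _]]].
      specialize (Hpt t Hi).
      split.
      * exists (sS (proj1_sig p)); intros n [[q [Gq Hq]] Hb].
        apply NNPP; intros Hn.
        destruct (Gdir p q Gp Gq) as [r0 [_ [Hrp Hrq]]].
        apply (proj1 (proj2 (proj2 (proj2 Hrp))) n) with t; auto.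
        apply (proj1 Hrq); auto.
      * exists (sR (proj1_sig p)); intros n [[q [Gq Hq]] Hb].
        apply NNPP; intros Hn.
        destruct (Gdir p q Gp Gq) as [r0 [_ [Hrp Hrq]]].
        apply (proj2 (proj2 (proj2 (proj2 Hrp))) n) with t; auto.
        apply (proj1 (proj2 Hrq)); auto.
Qed.
End MACore.

Fixpoint lst {T : Type} (inh : inhabited T) (n : nat) : list T :=
  match n with
  | 0 => []
  | Datatypes.S n => epsilon inh (fun t => ~ In t (lst inh n)) :: lst inh n
  end.

Lemma lst_mono {T} (inh : inhabited T) m n : m <= n -> incl (lst inh m) (lst inh n).
Proof.
  induction 1; [apply incl_refl|]. eapply incl_tran; eauto; simpl; intros x Hx; right; auto.
Qed.

Lemma countable_or_inj (T : Type) :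
  (exists e : nat -> option T, forall t, exists n, e n = Some t) \/
  (exists x : nat -> T, forall m n, x m = x n -> m = n).
Proof.
  destruct (classic (exists e : nat -> option T, forall t, exists n, e n = Some t)) as [H|H]; [left; auto|right].
  assert (inh : inhabited T).
  { apply NNPP; intros Hn; apply H; exists (fun _ => None); intros t; exfalso; apply Hn; constructor; auto. }
  assert (Hnew : forall n, exists t, ~ In t (lst inh n)).
  { intros n; apply NNPP; intros Hn; apply H; exists (fun m => nth_error (lst inh n) m).
    intros t; assert (Ht : In t (lst inh n)) by (apply NNPP; intros Ht; apply Hn; eauto).
    apply In_nth_error; auto. }
  set (x := fun n => epsilon inh (fun t => ~ In t (lst inh n))).
  assert (Hx1 : forall n, ~ In (x n) (lst inh n)).
  { intros n; apply (epsilon_spec inh (fun t => ~ In t (lst inh n))); apply Hnew. }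
  assert (Hx2 : forall m n, m < n -> In (x m) (lst inh n)).
  { intros m n Hmn; apply (lst_mono inh (Datatypes.S m) n); [lia|simpl; left; reflexivity]. }
  exists x; intros m n E.
  destruct (lt_eq_lt_dec m n) as [[Hl|Hl]|Hl]; auto.
  - exfalso; apply (Hx1 n); rewrite <- E; auto.
  - exfalso; apply (Hx1 m); rewrite E; auto.
Qed.

Lemma MA_core2 (MA : MA_sigma_centered) (T : Type) (HT : lt_continuum T)
  (b : T -> nat -> Prop) (Zs : nat -> (nat -> Prop) -> Prop)
  (H1 : forall k Z, Zs k Z -> finite_set Z)
  (H2 : forall k (L : list T) (E : nat -> Prop), finite_set E ->
        exists Z, Zs k Z /\ forall n, Z n -> ~ E n /\ forall t, In t L -> ~ b t n) :
  exists S1 S2 : nat -> Prop, (forall n, ~ (S1 n /\ S2 n)) /\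
    (forall k, exists Z, Zs k Z /\ subset Z S1) /\ (forall k, exists Z, Zs k Z /\ subset Z S2) /\
    (forall t, finite_set (fun n => S1 n /\ b t n) /\ finite_set (fun n => S2 n /\ b t n)).
Proof.
  destruct (countable_or_inj T) as [[e He]|[x Hx]].
  - apply (MA_core T b MA nat lt_continuum_nat e (fun n => n)); auto.
    intros k; exists k; auto.
  - assert (inh : inhabited T) by (constructor; exact (x 0)).
    apply (MA_core T b MA T HT Some (fun t => epsilon (inhabits 0) (fun n => x n = t))); auto.
    + intros t; exists t; auto.
    + intros k; exists (x k); apply Hx.
      apply (epsilon_spec (inhabits 0) (fun n => x n = x k)); eauto.
Qed.

Lemma sig_eq {A : Type} {P : A -> Prop} (x y : sig P) : proj1_sig x = proj1_sig y -> x = y.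
Proof.
  destruct x as [x Hx], y as [y Hy]; simpl; intros ->; f_equal; apply proof_irrelevance.
Qed.

Definition BB := nat -> bool.

Section WO.
Variable R : BB -> BB -> Prop.
Hypothesis Ranti : forall x y, R x y -> R y x -> x = y.
Hypothesis Rtrans : forall x y z, R x y -> R y z -> R x z.
Hypothesis Rtotal : forall x y, R x y \/ R y x.
Hypothesis Rmin : forall S : BB -> Prop, (exists x, S x) -> exists m, S m /\ forall y, S y -> R m y.

Definition lt0 v w := R v w /\ v <> w.
Definition segW w := {v : BB | lt0 v w}.
Definition big w := exists h : BB -> segW w, forall a b, h a = h b -> a = b.
Definition Pw w := forall w0, big w0 -> lt0 w w0.
Definition Wp := {w : BB | Pw w}.
Definition ltW (v w : Wp) := lt0 (proj1_sig v) (proj1_sig w).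

Lemma ltW_wf : well_founded ltW.
Proof.
  intros w; apply NNPP; intros Hw.
  destruct (Rmin (fun x => exists H : Pw x, ~ Acc ltW (exist _ x H))) as [m [[Hm Hacc] Hmin]].
  { destruct w as [w Hw']; exists w, Hw'; auto. }
  apply Hacc; constructor; intros [y Hy] Hlt; apply NNPP; intros Hn.
  assert (R m y) by (apply Hmin; exists Hy; auto).
  destruct Hlt as [H1 H2]; simpl in *; apply H2; apply Ranti; auto.
Qed.

Lemma ltW_trans u v w : ltW u v -> ltW v w -> ltW u w.
Proof.
  unfold ltW, lt0; intros [H1 H2] [H3 H4]; split; [eauto|].
  intros E; rewrite E in H1; apply H4; apply Ranti; auto.
Qed.

Lemma ltW_irrefl v : ~ ltW v v.
Proof. intros [_ H]; auto. Qed.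

Lemma ltW_total v w : v = w \/ ltW v w \/ ltW w v.
Proof.
  destruct (classic (proj1_sig v = proj1_sig w)) as [E|E]; [left; apply sig_eq; auto|right].
  destruct (Rtotal (proj1_sig v) (proj1_sig w)); [left|right]; split; auto.
Qed.

Lemma seg_small (w : Wp) : lt_continuum {v : Wp | ltW v w}.
Proof.
  split.
  - exists (fun v => proj1_sig (proj1_sig v)); intros a b E; apply sig_eq, sig_eq; auto.
  - intros [h Hh].
    assert (Hb : big (proj1_sig w)).
    { exists (fun a => exist (fun v => lt0 v (proj1_sig w)) (proj1_sig (proj1_sig (h a))) (proj2_sig (h a))).
      intros a b E; apply Hh; apply sig_eq, sig_eq; apply (f_equal (@proj1_sig _ _) E). }
    destruct (proj2_sig w _ Hb) as [_ H]; auto.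
Qed.

Lemma Wp_surj : exists s : Wp -> BB, forall b, exists w, s w = b.
Proof.
  destruct (classic (exists w0, big w0)) as [Hb|Hb].
  - destruct (Rmin big Hb) as [w0 [[h Hh] Hmin]].
    assert (HP : forall b, Pw (proj1_sig (h b))).
    { intros b w1 Hw1; specialize (Hmin w1 Hw1); destruct (proj2_sig (h b)) as [H1 H2]; split; eauto.
      intros E; rewrite E in H1; apply H2; apply Ranti; auto; rewrite <- E in *; auto. }
    exists (fun w => epsilon (inhabits (fun _ => true)) (fun b => proj1_sig (h b) = proj1_sig w)).
    intros b; exists (exist _ _ (HP b)); simpl.
    apply Hh; apply sig_eq.
    apply (epsilon_spec (inhabits (fun _ => true)) (fun b' => proj1_sig (h b') = proj1_sig (h b))); eauto.
  - exists (fun w => proj1_sig w); intros b.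
    assert (HP : Pw b) by (intros w0 H; exfalso; apply Hb; eauto).
    exists (exist _ b HP); reflexivity.
Qed.

End WO.

Definition coinf (S : nat -> Prop) := ~ finite_set (fun n => ~ S n).

Lemma coinf_sub (S S' : nat -> Prop) : coinf S' -> (forall n, S n -> S' n) -> coinf S.
Proof. intros H Hs Hf; apply H; apply fin_sub with (fun n => ~ S n); auto. Qed.

Lemma coinf_witness (S2 U : nat -> Prop) : ~ finite_set S2 -> finite_set (fun n => S2 n /\ U n) -> coinf U.
Proof.
  intros H2 HF Hc; apply H2; apply fin_sub with (fun n => ~ U n \/ (S2 n /\ U n)); [apply fin_union; auto|].
  intros n Hn; destruct (classic (U n)); auto.
Qed.

Lemma coinf_union_fin (U E : nat -> Prop) : coinf U -> finite_set E -> coinf (fun n => E n \/ U n).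
Proof.
  intros H HE Hc; apply H; apply fin_sub with (fun n => E n \/ ~ (E n \/ U n)); [apply fin_union; auto|].
  intros n Hn; destruct (classic (E n)); auto; right; tauto.
Qed.

Lemma unbounded_inf (S : nat -> Prop) : (forall k, exists n, k <= n /\ S n) -> ~ finite_set S.
Proof.
  intros H Hf; destruct (fin_bound S Hf) as [N HN]; destruct (H N) as [n [Hn Sn]]; specialize (HN n Sn); lia.
Qed.

Section Constr.
Variable MA : MA_sigma_centered.
Variable X : Type.
Variable I : (X -> Prop) -> Prop.
Hypothesis HI : is_ideal I.
Variable g : nat -> X.
Hypothesis Hg : forall x, exists n, g n = x.

Definition gi (x : X) : nat := epsilon (inhabits 0) (fun n => g n = x).
Lemma g_gi x : g (gi x) = x.
Proof. apply (epsilon_spec (inhabits 0) (fun n => g n = x)); auto. Qed.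

Definition cand := ((X -> Prop) * (X -> nat))%type.
Definition yv (b : BB) (n : nat) : nat := epsilon (inhabits 0) (fun m => b (2 * Cantor.to_nat (n, m) + 1) = true).
Definition decode (b : BB) : cand := (fun x => b (2 * gi x) = true, fun x => yv b (gi x)).

Lemma decode_surj (C : X -> Prop) (y : X -> nat) : exists b, decode b = (C, y).
Proof.
  exists (fun j => if Nat.even j then dec (C (g (Nat.div2 j)))
            else let (n, m) := Cantor.of_nat (Nat.div2 j) in Nat.eqb m (y (g n))).
  unfold decode; f_equal.
  - apply functional_extensionality; intros x; apply propositional_extensionality.
    rewrite Nat.even_even, Nat.div2_even, dec_true, g_gi; tauto.
  - apply functional_extensionality; intros x; unfold yv.
    set (P := fun m => (if Nat.even (2 * Cantor.to_nat (gi x, m) + 1) then dec (C (g (Nat.div2 (2 * Cantor.to_nat (gi x, m) + 1))))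
        else let (n, m0) := Cantor.of_nat (Nat.div2 (2 * Cantor.to_nat (gi x, m) + 1)) in Nat.eqb m0 (y (g n))) = true).
    assert (HP : forall m, P m <-> m = y x).
    { intros m; unfold P; rewrite Nat.even_odd, Nat.div2_odd', Cantor.cancel_of_to, Nat.eqb_eq, g_gi; tauto. }
    apply HP; apply (epsilon_spec (inhabits 0) P); exists (y x); apply HP; auto.
Qed.

Definition Kset (c : cand) (S : nat -> Prop) : Prop := I (fun x => fst c x /\ S (snd c x)).

Definition Relevant (c : cand) : Prop :=
  ~ I (fst c) /\ (forall k, finite_set (fun x => fst c x /\ snd c x = k)) /\
  exists Zs : nat -> (nat -> Prop) -> Prop,
    (forall k Z, Zs k Z -> finite_set Z) /\
    (forall k S, Kset c S -> exists Z, Zs k Z /\ forall m, ~ (Z m /\ S m)) /\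
    (forall S, Kset c S -> exists k, forall Z, Zs k Z -> ~ subset Z S).

Lemma Kset_sub c S S' : Kset c S -> (forall n, S' n -> S n) -> Kset c S'.
Proof. intros H Hs; destruct HI as [Hsub _]; apply Hsub with (1 := H); intros x [H1 H2]; auto. Qed.

Lemma Kset_union c S S' : Kset c S -> Kset c S' -> Kset c (fun n => S n \/ S' n).
Proof.
  intros H H'; destruct HI as [Hsub [Hun _]]; apply Hsub with (1 := Hun _ _ H H').
  intros x [H1 [H2|H2]]; auto.
Qed.

Lemma Kset_fin c E : (forall k, finite_set (fun x => fst c x /\ snd c x = k)) -> finite_set E -> Kset c E.
Proof.
  intros Hc [l Hl]; destruct HI as [_ [_ [Hfin _]]]; apply Hfin.
  apply fin_sub with (fun x => exists k, In k l /\ (fst c x /\ snd c x = k)).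
  - apply fin_list_union; auto.
  - intros x [H1 H2]; exists (snd c x); auto.
Qed.

Lemma Kset_list {A} c (L : list A) (q : A -> nat -> Prop) : (forall t, In t L -> Kset c (q t)) ->
  Kset c (fun n => exists t, In t L /\ q t n).
Proof.
  induction L as [|t L IH]; intros H.
  - destruct HI as [_ [_ [Hfin _]]]; apply Hfin; apply fin_empty; intros x [_ [t [[] _]]].
  - apply Kset_sub with (fun n => q t n \/ exists t', In t' L /\ q t' n).
    + apply Kset_union; [apply H; simpl; auto|apply IH; intros; apply H; simpl; auto].
    + intros n [t' [[<-|Ht] Hq]]; [left; auto|right; eauto].
Qed.

Variable R : BB -> BB -> Prop.
Hypothesis Ranti : forall x y, R x y -> R y x -> x = y.
Hypothesis Rtrans : forall x y z, R x y -> R y z -> R x z.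
Hypothesis Rtotal : forall x y, R x y \/ R y x.
Hypothesis Rmin : forall S : BB -> Prop, (exists x, S x) -> exists m, S m /\ forall y, S y -> R m y.
Variable s : Wp R -> BB.
Hypothesis Hs : forall b, exists w, s w = b.

Notation W := (Wp R).
Notation lt := (ltW R).

Definition candw (w : W) := decode (s w).

Definition Spec (w : W) (q : W -> nat -> Prop) (aw : nat -> Prop) : Prop :=
  ~ finite_set aw /\
  (forall v, lt v w -> finite_set (fun n => aw n /\ q v n)) /\
  (Relevant (candw w) -> (forall v, lt v w -> Kset (candw w) (q v)) -> ~ Kset (candw w) aw) /\
  (forall Fm : W -> Prop, finite_set Fm -> (forall v, Fm v -> lt v w) ->
     coinf (fun n => aw n \/ exists v, Fm v /\ q v n)).

Lemma Spec_exists w q :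
  (forall Fm : W -> Prop, finite_set Fm -> (forall v, Fm v -> lt v w) -> coinf (fun n => exists v, Fm v /\ q v n)) ->
  exists aw, Spec w q aw.
Proof.
  intros Hco.
  set (T := {v : W | lt v w}).
  set (b := fun t : T => q (proj1_sig t)).
  assert (HT : lt_continuum T) by (apply seg_small; auto).
  assert (Fin : forall S1 S2 : nat -> Prop, ~ finite_set S1 -> ~ finite_set S2 ->
    (forall n, ~ (S1 n /\ S2 n)) -> (forall t, finite_set (fun n => S1 n /\ b t n) /\ finite_set (fun n => S2 n /\ b t n)) ->
    (forall v, lt v w -> finite_set (fun n => S1 n /\ q v n)) /\
    (forall Fm : W -> Prop, finite_set Fm -> (forall v, Fm v -> lt v w) ->
     coinf (fun n => S1 n \/ exists v, Fm v /\ q v n))).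
  { intros S1 S2 HS1 HS2 Hd Hb; split.
    - intros v Hv; exact (proj1 (Hb (exist _ v Hv))).
    - intros Fm [l Hl] HFm; apply coinf_witness with S2; auto.
      apply fin_sub with (fun n => exists v, In v l /\ (S2 n /\ (Fm v /\ q v n))).
      + apply fin_list_union; intros v Hv.
        destruct (classic (Fm v)) as [Hf|Hf].
        * apply fin_sub with (fun n => S2 n /\ b (exist _ v (HFm v Hf)) n); [apply Hb|].
          intros n [H1 [_ H2]]; split; auto.
        * apply fin_empty; intros n [_ [Hf' _]]; auto.
      + intros n [H2 [H1|[v [Hv Hq]]]]; [exfalso; apply (Hd n); auto|exists v; auto]. }
  destruct (classic (Relevant (candw w) /\ forall v, lt v w -> Kset (candw w) (q v))) as [[Hrel Hall]|Hng].
  - destruct Hrel as [HC [Hfto [Zs [Z1 [Z2 Z3]]]]].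
    destruct (MA_core2 MA T HT b Zs Z1) as [S1 [S2 [Hd [HZ1 [HZ2 Hb]]]]].
    { intros k L E HE.
      destruct (Z2 k (fun n => E n \/ exists t, In t L /\ b t n)) as [Z [HZ HZd]].
      { apply Kset_union; [apply Kset_fin; auto|apply Kset_list; intros t _; apply Hall; exact (proj2_sig t)]. }
      exists Z; split; auto; intros n Hn; split.
      - intros HEn; apply (HZd n); auto.
      - intros t Ht Hbt; apply (HZd n); split; auto; right; eauto. }
    assert (Hpos : forall S, (forall k, exists Z, Zs k Z /\ subset Z S) -> ~ Kset (candw w) S).
    { intros S HS HK; destruct (Z3 S HK) as [k Hk]; destruct (HS k) as [Z [HZ HZS]]; apply (Hk Z); auto. }
    assert (Hinf : forall S, (forall k, exists Z, Zs k Z /\ subset Z S) -> ~ finite_set S).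
    { intros S HS Hf; apply (Hpos S HS); apply Kset_fin; auto. }
    destruct (Fin S1 S2 (Hinf _ HZ1) (Hinf _ HZ2) Hd Hb) as [F1 F2].
    exists S1; split; [apply Hinf; auto|split; [auto|split; [|auto]]].
    intros _ _; apply Hpos; auto.
  - set (Zs := fun k (Z : nat -> Prop) => exists n, k <= n /\ forall m, Z m <-> m = n).
    destruct (MA_core2 MA T HT b Zs) as [S1 [S2 [Hd [HZ1 [HZ2 Hb]]]]].
    { intros k Z [n [_ Hn]]; exists [n]; intros m Hm; apply Hn in Hm; subst; simpl; auto. }
    { intros k L E HE.
      assert (Hc : coinf (fun n => E n \/ exists v, (exists t, In t L /\ proj1_sig t = v) /\ q v n)).
      { apply coinf_union_fin; auto; apply Hco.
        - apply fin_image with (S := fun t => In t L); apply fin_list.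
        - intros v [t [_ <-]]; exact (proj2_sig t). }
      destruct (inf_above _ Hc k) as [n [Hkn Hn]].
      exists (fun m => m = n); split; [exists n; split; auto; tauto|].
      intros m ->; split; [intros HE'; apply Hn; auto|].
      intros t Ht Hbt; apply Hn; right; exists (proj1_sig t); split; eauto. }
    assert (Hinf : forall S, (forall k, exists Z, Zs k Z /\ subset Z S) -> ~ finite_set S).
    { intros S HS; apply unbounded_inf; intros k; destruct (HS k) as [Z [[n [Hkn HZn]] HZS]].
      exists n; split; auto; apply HZS; apply HZn; auto. }
    destruct (Fin S1 S2 (Hinf _ HZ1) (Hinf _ HZ2) Hd Hb) as [F1 F2].
    exists S1; split; [apply Hinf; auto|split; [auto|split; [|auto]]].
    intros Hrel Hall; exfalso; apply Hng; auto.
Qed.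

Definition empt : nat -> Prop := fun _ => False.
Definition stepf (w : W) (q : W -> nat -> Prop) := epsilon (inhabits empt) (Spec w q).
Definition qof (w : W) (p : forall v, lt v w -> nat -> Prop) : W -> nat -> Prop :=
  fun v => match excluded_middle_informative (lt v w) with left H => p v H | right _ => empt end.
Definition Ff (w : W) (p : forall v, lt v w -> nat -> Prop) := stepf w (qof w p).
Definition aa : W -> nat -> Prop := Fix (ltW_wf R Ranti Rmin) (fun _ => nat -> Prop) Ff.
Definition qa (w : W) := qof w (fun y _ => aa y).

Lemma aa_eq w : aa w = stepf w (qa w).
Proof.
  unfold aa at 1; rewrite Fix_eq; [reflexivity|].
  intros x f f' Hf; unfold Ff; f_equal; unfold qof; apply functional_extensionality; intros v.
  destruct (excluded_middle_informative (lt v x)); auto.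
Qed.

Lemma qa_lt w v : lt v w -> qa w v = aa v.
Proof. intros H; unfold qa, qof; destruct (excluded_middle_informative (lt v w)); tauto. Qed.

Lemma max_fin (l : list W) : forall (Fm : W -> Prop), (forall v, Fm v -> In v l) -> (exists v, Fm v) ->
  exists m, Fm m /\ forall v, Fm v -> v = m \/ lt v m.
Proof.
  induction l as [|x l IH]; intros Fm Hl Hne.
  - destruct Hne as [v Hv]; destruct (Hl v Hv).
  - destruct (classic (exists v, Fm v /\ v <> x)) as [Hne'|Hne'].
    + destruct (IH (fun v => Fm v /\ v <> x)) as [m' [[Hm'1 Hm'2] Hmax]]; auto.
      { intros v [Hv Hvx]; destruct (Hl v Hv); auto; congruence. }
      destruct (classic (Fm x)) as [Hx|Hx].
      * destruct (ltW_total R Rtotal x m') as [E|[E|E]]; [congruence| |].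
        -- exists m'; split; auto; intros v Hv.
           destruct (classic (v = x)) as [->|Hvx]; auto.
        -- exists x; split; auto; intros v Hv.
           destruct (classic (v = x)) as [->|Hvx]; auto.
           right; destruct (Hmax v (conj Hv Hvx)) as [->|Hvm]; auto.
           eapply ltW_trans; eauto.
      * exists m'; split; auto; intros v Hv; apply Hmax; split; auto; congruence.
    + exists x; destruct Hne as [v Hv].
      assert (Hvx : v = x) by (apply NNPP; intros Hn; apply Hne'; eauto).
      subst; split; auto; intros v Hv'; left; apply NNPP; intros Hn; apply Hne'; eauto.
Qed.

Lemma aa_spec : forall w, Spec w (qa w) (aa w).
Proof.
  intros w; induction w as [w IH] using (well_founded_ind (ltW_wf R Ranti Rmin)).
  rewrite (aa_eq w). unfold stepf.
  apply (epsilon_spec (inhabits empt) (Spec w (qa w))).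
  apply Spec_exists.
  intros Fm HFm Hlt.
  destruct (classic (exists v, Fm v)) as [Hne|He].
  - destruct HFm as [l Hl]; destruct (max_fin l Fm Hl Hne) as [m [Hm Hmax]].
    destruct (IH m (Hlt m Hm)) as [_ [_ [_ Hc]]].
    specialize (Hc (fun v => Fm v /\ lt v m)).
    assert (Hc' : coinf (fun n => aa m n \/ exists v, (Fm v /\ lt v m) /\ qa m v n)).
    { apply Hc; [exists l; intros v [Hv _]; auto| intros v [_ H]; auto]. }
    apply coinf_sub with (1 := Hc'). intros n [v [Hv Hq]]. rewrite qa_lt in Hq; auto.
    destruct (Hmax v Hv) as [->|Hvm]; [left; auto| right; exists v; split; auto; rewrite qa_lt; auto].
  - intros Hf; destruct (fin_bound _ Hf) as [N HN]; specialize (HN N); apply (Nat.lt_irrefl N); apply HN.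
    intros [v [Hv _]]; apply He; eauto.
Qed.

Lemma aa_inf w : ~ finite_set (aa w).
Proof. exact (proj1 (aa_spec w)). Qed.

Lemma aa_ad v w : lt v w -> finite_set (fun n => aa w n /\ aa v n).
Proof.
  intros H; destruct (aa_spec w) as [_ [H2 _]]; specialize (H2 v H); rewrite qa_lt in H2; auto.
Qed.

Lemma aa_rel w : Relevant (candw w) -> (forall v, lt v w -> Kset (candw w) (aa v)) -> ~ Kset (candw w) (aa w).
Proof.
  intros H1 H2; destruct (aa_spec w) as [_ [_ [H3 _]]]; apply H3; auto.
  intros v Hv; rewrite qa_lt; auto.
Qed.

End Constr.

Section Topo.
Variable A : (nat -> Prop) -> Prop.
Hypothesis HAD : forall a b, A a -> A b -> a <> b -> finite_set (fun n => a n /\ b n).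
Hypothesis Hinf : forall a, A a -> ~ finite_set a.
Hypothesis HAinf : ~ finite_set A.

Lemma MAd_eq a h1 h2 : @MAd A a h1 = MAd a h2.
Proof. f_equal; apply proof_irrelevance. Qed.

Definition Onat (n : nat) : mpoint A -> Prop := fun q => q = MNat n.
Definition Oad a (h : A a) (F : nat -> Prop) : mpoint A -> Prop :=
  fun q => q = MAd a h \/ exists k, q = MNat k /\ a k /\ ~ F k.
Definition Oinf (F : nat -> Prop) (G : list (nat -> Prop)) : mpoint A -> Prop :=
  fun q => q = MInf \/ (exists b h, q = MAd b h /\ ~ In b G) \/
           (exists k, q = MNat k /\ ~ F k /\ ~ (exists b, In b G /\ b k)).

Lemma open_nat n : mopen A (Onat n).
Proof. intros p Hp; exists (Onat n); split; [|intros q; auto]. unfold Onat in Hp; subst; simpl; unfold Onat; tauto. Qed.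

Lemma open_ad a h F : finite_set F -> mopen A (Oad a h F).
Proof.
  intros HF p [->|[k [-> [Hak HFk]]]].
  - exists (Oad a h F); split; [|intros q; auto]. simpl; exists F; split; auto; unfold Oad; tauto.
  - exists (Onat k); split; [simpl; unfold Onat; tauto|]. intros q Hq; unfold Onat in Hq; subst; right; eauto.
Qed.

Lemma open_inf F G : finite_set F -> (forall b, In b G -> A b) -> mopen A (Oinf F G).
Proof.
  intros HF HG p [->|[[b [h [-> HbG]]]|[k [-> [HFk HGk]]]]].
  - exists (Oinf F G); split; [|intros q; auto]. simpl; exists F, G; split; auto; split; auto; unfold Oinf; tauto.
  - set (F' := fun k => F k \/ exists g, In g G /\ (b k /\ g k)).
    exists (Oad b h F'); split.
    + simpl; exists F'; split; [|unfold Oad; tauto].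
      apply fin_union; auto; apply fin_list_union; intros g' Hg'.
      apply HAD; auto. intros E; subst; auto.
    + intros q [->|[k [-> [Hbk HF'k]]]]; unfold Oinf.
      * right; left; eauto.
      * right; right; exists k; split; auto; split.
        -- intros Hk; apply HF'k; left; auto.
        -- intros [g' [Hg' Hk]]; apply HF'k; right; eauto.
  - exists (Onat k); split; [simpl; unfold Onat; tauto|]. intros q Hq; unfold Onat in Hq; subst; right; right; eauto.
Qed.

Definition sep (p q : mpoint A) := exists U V, mopen A U /\ mopen A V /\ U p /\ V q /\ forall r, ~ (U r /\ V r).

Lemma sep_sym p q : sep p q -> sep q p.
Proof. intros [U [V [H1 [H2 [H3 [H4 H5]]]]]]; exists V, U; repeat split; auto; intros r [? ?]; apply (H5 r); auto. Qed.

Lemma fin_eq (n : nat) : finite_set (fun k => k = n).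
Proof. exists [n]; intros k ->; simpl; auto. Qed.

Lemma sep_nat_any n q : MNat n <> q -> sep (MNat n) q.
Proof.
  intros Hne; destruct q as [m|b h|].
  - exists (Onat n), (Onat m); repeat split; try apply open_nat; try reflexivity.
    intros r [H1 H2]; unfold Onat in *; subst; congruence.
  - exists (Onat n), (Oad b h (fun k => k = n)); repeat split; try apply open_nat; try apply open_ad; try apply fin_eq; try reflexivity.
    + left; reflexivity.
    + intros r [H1 [H2|[k [H2 [_ H3]]]]]; unfold Onat in *; subst; try discriminate.
      injection H2; intros; subst; auto.
  - exists (Onat n), (Oinf (fun k => k = n) []); repeat split; try apply open_nat; try apply open_inf; try apply fin_eq; try reflexivity.
    + intros b [].
    + left; reflexivity.
    + intros r [H1 [H2|[[b [h [H2 _]]]|[k [H2 [H3 _]]]]]]; unfold Onat in *; subst; try discriminate.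
      injection H2; intros; subst; auto.
Qed.

Lemma fin_none {T} : finite_set (fun _ : T => False).
Proof. exists []; intros _ []. Qed.

Lemma sep_ad_any a h q : MAd a h <> q -> sep (MAd a h) q.
Proof.
  intros Hne; destruct q as [m|b h'|].
  - apply sep_sym, sep_nat_any; auto.
  - assert (Hab : a <> b) by (intros E; subst; apply Hne; apply MAd_eq).
    exists (Oad a h (fun _ => False)), (Oad b h' (fun k => a k /\ b k)); repeat split;
      try apply open_ad; try apply fin_none; try (apply HAD; auto); try (left; reflexivity).
    intros r [[H1|[k [H1 [H2 H3]]]] [H4|[k' [H4 [H5 H6]]]]]; subst; try discriminate.
    + injection H4; intros; subst; auto.
    + injection H4; intros; subst; auto.
  - exists (Oad a h (fun _ => False)), (Oinf (fun _ => False) [a]); repeat split;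
      try apply open_ad; try apply open_inf; try apply fin_none; try (left; reflexivity).
    + intros b [<-|[]]; auto.
    + intros r [[H1|[k [H1 [H2 H3]]]] [H4|[[b [h' [H4 H5]]]|[k' [H4 [H5 H6]]]]]]; subst; try discriminate.
      * injection H4; intros; subst; apply H5; simpl; auto.
      * injection H4; intros; subst; apply H6; exists a; simpl; auto.
Qed.

Lemma hausdorff : mhausdorff A.
Proof.
  intros p q Hne; destruct p as [n|a h|].
  - apply sep_nat_any; auto.
  - apply sep_ad_any; auto.
  - destruct q as [m|b h|]; [| |exfalso; auto].
    + apply sep_sym, sep_nat_any; auto.
    + apply sep_sym, sep_ad_any; auto.
Qed.

Lemma open_ad_nat U a h : mopen A U -> U (MAd a h) -> exists k, U (MNat k).
Proof.
  intros HU Hp; destruct (HU _ Hp) as [V [[F [HF HV]] HVU]].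
  destruct (inf_minus_fin a F (Hinf a h) HF) as [k [Hak HFk]].
  exists k; apply HVU; apply HV; right; eauto.
Qed.

Lemma separable : mseparable A.
Proof.
  exists (fun p => exists n, p = MNat n); split.
  - exists MNat; intros p [n ->]; eauto.
  - intros U HU [p Hp]; destruct p as [n|a h|].
    + eauto.
    + destruct (open_ad_nat U a h HU Hp) as [k Hk]; eauto.
    + destruct (HU _ Hp) as [V [[F [G [HF [HG HV]]]] HVU]].
      destruct (inf_minus_fin A (fun b => In b G) HAinf (fin_list G)) as [b [Hb HbG]].
      assert (U (MAd b Hb)) by (apply HVU, HV; right; left; eauto).
      destruct (open_ad_nat U b Hb HU H) as [k Hk]; eauto.
Qed.

Lemma conv_basic {X} (x : X -> mpoint A) (B : X -> Prop) p :
  (forall V, basic_nbhd A p V -> finite_set (fun n => B n /\ ~ V (x n))) -> mconverges A x B.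
Proof.
  intros H; exists p; intros U HU Hp; destruct (HU p Hp) as [V [HV HVU]].
  apply fin_sub with (1 := H V HV); intros n [Bn Hn]; split; auto.
Qed.

Lemma conv_const {X} (x : X -> mpoint A) (B : X -> Prop) p : (forall n, B n -> x n = p) -> mconverges A x B.
Proof.
  intros H; exists p; intros U _ Hp; apply fin_empty; intros n [Bn Hn]; rewrite H in Hn; auto.
Qed.

Lemma conv_inf {X} (x : X -> mpoint A) (B : X -> Prop) :
  (forall n, B n -> exists b h, x n = MAd b h) ->
  (forall b, A b -> finite_set (fun n => B n /\ exists h, x n = MAd b h)) -> mconverges A x B.
Proof.
  intros H1 H2; apply conv_basic with MInf; intros V [F [G [HF [HG HV]]]].
  apply fin_sub with (fun n => exists b, In b G /\ (B n /\ exists h, x n = MAd b h)).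
  - apply fin_list_union; intros b Hb; apply H2; auto.
  - intros n [Bn Hn]; destruct (H1 n Bn) as [b [h E]]; exists b; split; eauto.
    apply NNPP; intros HbG; apply Hn; apply HV; right; left; exists b, h; auto.
Qed.

Lemma conv_ad {X} (x : X -> mpoint A) (B : X -> Prop) a (h : A a) (y : X -> nat) :
  (forall n, B n -> x n = MNat (y n) /\ a (y n)) ->
  (forall k, finite_set (fun n => B n /\ y n = k)) -> mconverges A x B.
Proof.
  intros H1 H2; apply conv_basic with (MAd a h); intros V [F [[lF HF] HV]].
  apply fin_sub with (fun n => exists k, In k lF /\ (B n /\ y n = k)).
  - apply fin_list_union; auto.
  - intros n [Bn Hn]; destruct (H1 n Bn) as [E Ha]; exists (y n); split; auto.
    apply HF; apply NNPP; intros HFy; apply Hn; apply HV; right; exists (y n); auto.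
Qed.

End Topo.

Definition WOstmt : Prop :=
  exists R : BB -> BB -> Prop,
    (forall x y, R x y -> R y x -> x = y) /\
    (forall x y z, R x y -> R y z -> R x z) /\
    (forall x y, R x y \/ R y x) /\
    (forall S : BB -> Prop, (exists x, S x) -> exists m, S m /\ forall y, S y -> R m y).

Theorem main_wo (WO : WOstmt) :
  MA_sigma_centered ->
  forall (X : Type) (I : (X -> Prop) -> Prop),
    countably_infinite X -> is_ideal I -> strongly_unboring I ->
    exists A : (nat -> Prop) -> Prop,
      mrowka_family A /\ ~ countable_type (mpoint A) /\ mseparable A /\ FinBW I A.
Proof.
  intros MA X I [g [Hginj Hg]] HI HSU.
  destruct WO as [R [Ranti [Rtrans [Rtotal Rmin]]]].
  destruct (Wp_surj R Ranti Rtrans Rmin) as [s Hs].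
  set (a := aa X I g R Ranti Rmin s).
  assert (a_inf : forall w, ~ finite_set (a w)) by (intros w; exact (aa_inf MA X I HI g R Ranti Rtrans Rtotal Rmin s w)).
  assert (a_ad : forall v w, v <> w -> finite_set (fun n => a v n /\ a w n)).
  { intros v w Hvw; destruct (ltW_total R Rtotal v w) as [E|[E|E]]; [contradiction| |].
    - apply fin_sub with (1 := aa_ad MA X I HI g R Ranti Rtrans Rtotal Rmin s v w E); intros n [? ?]; split; auto.
    - exact (aa_ad MA X I HI g R Ranti Rtrans Rtotal Rmin s w v E). }
  assert (a_inj : forall v w, a v = a w -> v = w).
  { intros v w E; apply NNPP; intros Hvw; apply (a_inf v); apply fin_sub with (1 := a_ad v w Hvw).
    intros n Hn; rewrite <- E; auto. }
  assert (Wunc : forall phi : Wp R -> nat, (forall v w, phi v = phi w -> v = w) -> False).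
  { intros phi Hphi; apply no_inj_nat.
    assert (inhW : inhabited (Wp R)) by (destruct (Hs (fun _ => true)) as [w _]; constructor; exact w).
    set (r := fun b => epsilon inhW (fun w => s w = b)).
    assert (Hr : forall b, s (r b) = b) by (intros b; apply (epsilon_spec inhW (fun w => s w = b)); apply Hs).
    exists (fun b => phi (r b)); intros b1 b2 E; rewrite <- (Hr b1), <- (Hr b2); f_equal; apply Hphi; auto. }
  set (A := fun S => exists w, a w = S).
  assert (HAD : forall b1 b2, A b1 -> A b2 -> b1 <> b2 -> finite_set (fun n => b1 n /\ b2 n)).
  { intros b1 b2 [v <-] [w <-] Hne; apply a_ad; intros ->; auto. }
  assert (HAi : forall b, A b -> ~ finite_set b) by (intros b [w <-]; auto).
  assert (HAinf : ~ finite_set A).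
  { intros [l Hl]; apply (Wunc (fun w => epsilon (inhabits 0) (fun n => nth_error l n = Some (a w)))).
    intros v w E.
    assert (Hs' : forall u, nth_error l (epsilon (inhabits 0) (fun n => nth_error l n = Some (a u))) = Some (a u)).
    { intros u; apply (epsilon_spec (inhabits 0) (fun n => nth_error l n = Some (a u))).
      apply In_nth_error; apply Hl; exists u; auto. }
    apply a_inj; pose proof (Hs' v) as H1; pose proof (Hs' w) as H2; rewrite E in H1; congruence. }
  exists A; split; [|split; [|split]].
  - split; auto.
  - intros [f Hf]; apply (Wunc (fun w => epsilon (inhabits 0) (fun n => f n = MAd (a w) (ex_intro _ w eq_refl)))).
    intros v w E.
    assert (Hs' : forall u, f (epsilon (inhabits 0) (fun n => f n = MAd (a u) (ex_intro _ u eq_refl))) = MAd (a u) (ex_intro _ u eq_refl)).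
    { intros u; apply (epsilon_spec (inhabits 0) (fun n => f n = MAd (a u) (ex_intro _ u eq_refl))); apply Hf. }
    apply a_inj; pose proof (Hs' v) as H1; pose proof (Hs' w) as H2; rewrite E in H1; rewrite H1 in H2.
    injection H2; auto.
  - apply separable; auto.
  - split; [apply hausdorff; auto|].
    intros x.
    destruct (classic (exists p, ~ I (fun n => x n = p))) as [[p Hp]|Hall].
    { exists (fun n => x n = p); split; auto; apply conv_const with p; auto. }
    assert (Hfib : forall p, I (fun n => x n = p)) by (intros p; apply NNPP; intros H; apply Hall; eauto).
    destruct HI as [Isub [Iun [Ifin Itop]]].
    set (f := fun n => epsilon (inhabits 0) (fun m => x (g m) = x n)).
    assert (f_spec : forall n, x (g (f n)) = x n).
    { intros n; apply (epsilon_spec (inhabits 0) (fun m => x (g m) = x n)); destruct (Hg n) as [m Hm]; exists m; rewrite Hm; reflexivity. }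
    assert (f_eq : forall n n', x n = x n' -> f n = f n') by (intros n n' E; unfold f; rewrite E; reflexivity).
    assert (HD : in_D I f).
    { intros m; destruct (classic (exists n0, f n0 = m)) as [[n0 Hn0]|Hn].
      - apply Isub with (1 := Hfib (x n0)); intros n Hn; rewrite <- f_spec, Hn, <- Hn0, f_spec; reflexivity.
      - apply Ifin; apply fin_empty; intros n Hm; apply Hn; eauto. }
    destruct (HSU f HD) as [C [HC [Hfto [Zs [Z1 [Z2 Z3]]]]]].
    assert (fibC : forall p, finite_set (fun n => C n /\ x n = p)).
    { intros p; destruct (classic (exists n0, C n0 /\ x n0 = p)) as [[n0 [_ Hn0]]|Hn].
      - apply fin_sub with (1 := Hfto (f n0)); intros n [Cn Hxn]; split; auto; apply f_eq; congruence.
      - apply fin_empty; intros n Hm; apply Hn; eauto. }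
    set (Cad := fun n => C n /\ exists b h, x n = MAd b h).
    destruct (classic (I Cad)) as [HCad|HCad].
    2:{ exists Cad; split; auto; apply conv_inf.
        - intros n [_ H]; exact H.
        - intros b hb; apply fin_sub with (1 := fibC (MAd b hb)).
          intros n [[Cn _] [h E]]; split; auto; rewrite E; apply MAd_eq. }
    set (Cnat := fun n => C n /\ exists k, x n = MNat k).
    set (Cinf := fun n => C n /\ x n = MInf).
    set (y := fun n => match x n with MNat k => k | _ => 0 end).
    assert (HCinf : I Cinf) by (apply Ifin; apply fibC).
    assert (HCnat : ~ I Cnat).
    { intros H; apply HC; apply Isub with (1 := Iun _ _ H (Iun _ _ HCad HCinf)).
      intros n Cn; destruct (x n) eqn:E.
      - left; split; eauto.
      - right; left; split; eauto.
      - right; right; split; auto. }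
    set (A0 := fun S n => (Cnat n /\ S (y n)) \/ Cad n \/ Cinf n).
    assert (HA0 : forall S, I (fun n => Cnat n /\ S (y n)) -> restr I C (fun n => A0 S n /\ C n)).
    { intros S HS; exists (A0 S); split; [apply Iun; auto|tauto]. }
    assert (HA0' : forall (S : nat -> Prop) n, C n -> (forall k, x n = MNat k -> S k) -> A0 S n /\ C n).
    { intros S n Cn HSk; split; auto; unfold A0; destruct (x n) eqn:E.
      - left; split; [split; eauto|]; unfold y; rewrite E; auto.
      - right; left; split; eauto.
      - right; right; split; auto. }
    assert (Hrel : Relevant X I (Cnat, y)).
    { split; [exact HCnat|split].
      - intros k; apply fin_sub with (1 := fibC (MNat k)); simpl.
        intros n [[Cn [k' E]] Hy]; split; auto; unfold y in Hy; rewrite E in Hy; rewrite E; subst; auto.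
      - exists (fun k Z' => exists Z, Zs k Z /\ forall m, Z' m <-> exists n, Z n /\ y n = m).
        split; [|split].
        + intros k Z' [Z [HZ HZ']]; apply fin_sub with (fun m => exists n, Z n /\ y n = m).
          * apply fin_image; apply (Z1 k Z HZ).
          * intros m; apply HZ'.
        + intros k S HK; destruct (Z2 k _ (HA0 S HK)) as [Z [HZ HZd]].
          exists (fun m => exists n, Z n /\ y n = m); split; [exists Z; split; auto; tauto|].
          intros m [[n [Zn <-]] HSm]; apply (HZd n); split; auto.
          apply HA0'; [apply (Z1 k Z HZ); auto|]; intros k' E; unfold y in HSm; rewrite E in HSm; auto.
        + intros S HK; destruct (Z3 _ (HA0 S HK)) as [k Hk]; exists k.
          intros Z' [Z [HZ HZ']] Hsub; apply (Hk Z HZ); intros n Zn.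
          apply HA0'; [apply (Z1 k Z HZ); auto|]; intros k' E; apply Hsub; apply HZ'; exists n; split; auto.
          unfold y; rewrite E; auto. }
    destruct (decode_surj X g Hg Cnat y) as [bb Hbb].
    destruct (Hs bb) as [w Hw].
    assert (Hcw : candw X g R s w = (Cnat, y)) by (unfold candw; rewrite Hw; exact Hbb).
    assert (Hex : exists v, ~ Kset X I (Cnat, y) (a v)).
    { destruct (classic (forall v, ltW R v w -> Kset X I (Cnat, y) (a v))) as [Hallv|Hn].
      - exists w; rewrite <- Hcw; apply (aa_rel MA X I (conj Isub (conj Iun (conj Ifin Itop))) g R Ranti Rtrans Rtotal Rmin s w);
          rewrite Hcw; auto.
      - apply NNPP; intros Hn'; apply Hn; intros v _; apply NNPP; intros Hv; apply Hn'; eauto. }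
    destruct Hex as [v Hv].
    exists (fun n => Cnat n /\ a v (y n)); split; [exact Hv|].
    apply (@conv_ad A X x (fun n => Cnat n /\ a v (y n)) (a v) (ex_intro _ v eq_refl) y).
    + intros n [[Cn [k E]] Hav]; unfold y in *; rewrite E in *; auto.
    + intros k; apply fin_sub with (1 := fibC (MNat k)).
      intros n [[[Cn [k' E]] _] Hy]; split; auto; unfold y in Hy; rewrite E in Hy; rewrite E; subst; auto.
Qed.
From mathcomp Require Import ssreflect ssrfun ssrbool eqtype ssrnat seq boolp wochoice.

Lemma WO_holds : WOstmt.
Proof.
have [R HR] := @well_ordering_principle (nat -> bool : eqType).
have wc : wo_chain R predT by apply: withinW.
have Rtot := wo_chainW wc.
have Ranti := wo_chain_antisymmetric wc.
have Rmin : forall A : {pred BB}, nonempty A -> exists z, z \in A /\ forall x, x \in A -> R z x.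
  by move=> A /HR [z [[Az Hz] _]]; exists z; split.
exists (fun x y => R x y); split; [|split; [|split]].
- by move=> x y Hxy Hyx; apply: Ranti => //; rewrite Hxy Hyx.
- move=> x y z Hxy Hyz.
  have [m [Hm Hmin]] := Rmin [mem [:: x; y; z]] (ex_intro _ x (mem_head _ _)).
  move: Hm; rewrite !inE => /or3P [/eqP Em|/eqP Em|/eqP Em]; subst m.
  + by apply: Hmin; rewrite !inE eqxx !orbT.
  + have Eyx : y = x by apply: Ranti => //; rewrite Hxy (Hmin x) // !inE eqxx.
    by subst y.
  + have Eyz : y = z by apply: Ranti => //; rewrite Hyz (Hmin y) // !inE eqxx !orbT.
    by subst y.
- by move=> x y; have := Rtot x y isT isT => /orP [H|H]; [left|right].
- move=> S [x Sx].
  have [m [Hm Hmin]] := Rmin [pred x | `[< S x >]] (ex_intro _ x (asboolT Sx)).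
  exists m; split; first by move: Hm; rewrite inE => /asboolP.
  by move=> y Sy; apply: Hmin; rewrite inE; apply/asboolP.
Qed.

Theorem theorem5p6 :
  MA_sigma_centered ->
  forall (X : Type) (I : (X -> Prop) -> Prop),
    countably_infinite X -> is_ideal I -> strongly_unboring I ->
    exists A : (nat -> Prop) -> Prop,
      mrowka_family A /\ ~ countable_type (mpoint A) /\ mseparable A /\ FinBW I A.
Proof. exact (main_wo WO_holds). Qed.
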